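(* Let $W$ be a stopping time in $\mathcal{T}$ and let $0<\rho<1$. Then $Cap_{\mathcal{T}}\widehat{W_{\mathcal{T}}^{\rho}}\le\rho^{-2}Cap_{\mathcal{T}}W$.
   Context: Tree. $\mathcal{T}$ is the rooted dyadic tree whose vertices are the dyadic arcs of the unit circle. The root $o$ is the whole circle. The vertices at level $n\ge0$ are the arcs $\{e^{it}:2\pi j2^{-n}\le t<2\pi(j+1)2^{-n}\}$ for $0\le j<2^n$. The two children $x_+,x_-$ of a vertex $x$ are the two arcs at the next level contained in it, and $x^{-1}$ denotes the parent. Write $y\le x$ if $x$ lies in the subtree rooted at $y$, and $y<x$ if moreover $y\ne x$. $[o,x]=\{y:y\le x\}$ is the geodesic from the root. A stopping time is a set of pairwise incomparable vertices. $\mathcal{G}(\{o\},W)$ is the union of the geodesics $[o,w]$, $w\in W$. Capacity. For $f:\mathcal{T}\to\mathbb{R}$ put $If(x)=\sum_{y\in[o,x]}f(y)$, and define $Cap_{\mathcal{T}}(W)=\inf\{\|f\|_{\ell^2(\mathcal{T})}^2: If\ge1\text{ on }W\}$. For a stopping time $W$ there is a unique minimizer $h$, and $H=Ih$ satisfies $H=1$ on $W$ and $\|h\|_{\ell^2}^2=Cap_{\mathcal{T}}W$. Capacitary blowup. For $0<\rho<1$, the capacitary blowup is $\widehat{W_{\mathcal{T}}^{\rho}}=\{t\in\mathcal{G}(\{o\},W):H(t)\ge\rho\text{ and }H(x)\le\rho\text{ for all }x<t\}$. *)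

(* Defs.v *)
From HB Require Import structures.
From mathcomp Require Import all_boot all_order all_algebra.
From mathcomp Require Import all_classical all_reals all_analysis.
From Stdlib Require Import ClassicalEpsilon.
Set Implicit Arguments. Unset Strict Implicit. Unset Printing Implicit Defensive.
Import Order.TTheory GRing.Theory Num.Theory.
Local Open Scope classical_set_scope.
Local Open Scope ring_scope.

(* Vertices of the rooted dyadic tree T: a dyadic arc at level n is coded by
   the sequence of n binary choices (child x_- = false, x_+ = true) leading
   from the root o = [::] (the whole circle) to it.  Level = size. *)
Definition vertex := seq bool.
Definition root : vertex := [::].
Definition children (x : vertex) : vertex * vertex := (rcons x true, rcons x false).
Definition parent (x : vertex) : vertex := take (size x).-1 x.

(* y <= x : x lies in the subtree rooted at y, i.e. y is a prefix of x. *)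
Definition tle (y x : vertex) : Prop := prefix y x.
Definition tlt (y x : vertex) : Prop := prefix y x /\ y <> x.

Definition stopping_time (W : set vertex) : Prop :=
  forall x y, W x -> W y -> tle x y -> x = y.

Definition geodesics_to (W : set vertex) : set vertex :=
  [set t | exists2 w, W w & tle t w].

(* If(x) = sum over y in [o,x] of f(y); the prefixes of x are take i x, i <= size x. *)
Definition Iop {R : realType} (f : vertex -> R) (x : vertex) : R :=
  \sum_(i < (size x).+1) f (take i x).

Definition l2norm2 {R : realType} (f : vertex -> R) : \bar R :=
  \esum_(v in [set: vertex]) ((f v) ^+ 2)%:E.

Definition admissible {R : realType} (W : set vertex) (f : vertex -> R) : Prop :=
  forall w, W w -> 1 <= Iop f w.

Definition Cap {R : realType} (W : set vertex) : \bar R :=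
  ereal_inf [set l2norm2 f | f in [set f : vertex -> R | admissible W f]].

Definition is_cap_minimizer {R : realType} (W : set vertex) (f : vertex -> R) : Prop :=
  admissible W f /\ l2norm2 f = Cap W.

(* the (unique, for a stopping time) minimizer h, chosen by epsilon *)
Definition cap_minimizer {R : realType} (W : set vertex) : vertex -> R :=
  epsilon (inhabits (fun _ => 0)) (is_cap_minimizer W).

Definition cap_potential {R : realType} (W : set vertex) : vertex -> R :=
  Iop (cap_minimizer W).

Definition cap_blowup {R : realType} (W : set vertex) (rho : R) : set vertex :=
  [set t | geodesics_to W t /\ rho <= cap_potential W t /\
           (forall x, tlt x t -> cap_potential W x <= rho)].

(* Main.v *)
Require Import Defs.
From HB Require Import structures.
From mathcomp Require Import all_boot all_order all_algebra finmap.
From mathcomp Require Import all_classical all_reals all_analysis.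
From Stdlib Require Import ClassicalEpsilon.
From mathcomp Require Import lra.
Import Order.TTheory GRing.Theory Num.Theory.
Import numFieldNormedType.Exports.
Set Implicit Arguments.
Local Open Scope classical_set_scope.
Local Open Scope ring_scope.

Lemma l2_le (R : realType) (f : vertex -> R) (r : R) :
  (l2norm2 f <= r%:E)%E <-> forall s : seq vertex, uniq s -> \sum_(x <- s) f x ^+ 2 <= r.
Proof.
split.
- move=> H s us; rewrite -lee_fin; apply: le_trans H.
  rewrite /l2norm2; apply: esum_ge; exists [set` s].
    by split; [exact: finite_seq|].
  by rewrite -fsbig_seq // sumEFin.
- move=> H; rewrite /l2norm2 /esum; apply: ge_ereal_sup => _ [A [finA _] <-].
  rewrite fsbig_finite //= sumEFin lee_fin; apply: H; exact: fset_uniq.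
Qed.

Lemma l2_ge0 (R : realType) (f : vertex -> R) : (0 <= l2norm2 f)%E.
Proof. by apply: esum_ge0 => x _; rewrite lee_fin sqr_ge0. Qed.

Definition ind0 (R : realType) : vertex -> R := fun v => (v == [::])%:R.

Lemma ind0_adm (R : realType) W : admissible W (@ind0 R).
Proof.
move=> w _; rewrite /Iop big_ord_recl /= /ind0 take0 eqxx.
rewrite big1 ?addr0 // => i _.
by case: w i => [|a w] [i /= Hi] //.
Qed.

Lemma ind0_l2 (R : realType) : (l2norm2 (@ind0 R) <= 1%:E)%E.
Proof.
apply/l2_le => s us.
rewrite (eq_bigr (fun x => ((x == [::]) : nat)%:R)); last first.
  by move=> x _; rewrite /ind0; case: eqP => _; rewrite ?expr1n ?expr0n.
rewrite -natr_sum.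
have -> : (\sum_(x <- s) ((x == [::]) : nat))%N = count_mem [::] s.
  by elim: s {us} => [|a s IH]; rewrite ?big_nil ?big_cons ?IH.
by rewrite count_uniq_mem //; case: (_ \in _).
Qed.

Lemma Cap_fin (R : realType) (W : set vertex) : (@Cap R W) \is a fin_num /\ (0 <= @Cap R W <= 1%:E)%E.
Proof.
have h0 : (0 <= (Cap W : \bar R))%E.
  by apply: le_ereal_inf_tmp => _ [f _ <-]; exact: l2_ge0.
have h1 : ((Cap W : \bar R) <= 1%:E)%E.
  apply: le_trans (ind0_l2 R); apply: ereal_inf_lbound; exists (@ind0 R) => //.
  exact: ind0_adm.
split; last by rewrite h0 h1.
by rewrite ge0_fin_numE // (le_lt_trans h1) // ltey.
Qed.


Definition clip {R : realType} (f : vertex -> R) : vertex -> R :=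
  fun v => if f v <= 0 then 0 else if 1 <= f v then 1 else f v.

Lemma clip_range {R : realType} (f : vertex -> R) v : 0 <= clip f v <= 1.
Proof.
rewrite /clip; case: ifP => [|/negbT]; rewrite ?lexx ?ler01 // -ltNge => h.
case: ifP => [|/negbT]; rewrite ?lexx ?ler01 // -ltNge => h'.
by rewrite !ltW.
Qed.

Lemma clip_sq {R : realType} (f : vertex -> R) v : clip f v ^+ 2 <= f v ^+ 2.
Proof.
rewrite /clip; case: ifP => [|/negbT]; rewrite ?expr0n ?sqr_ge0 // -ltNge => h.
case: ifP => // h'; rewrite expr1n expr2; nra.
Qed.

Lemma clip_adm (R : realType) (W : set vertex) (f : vertex -> R) :
  admissible W f -> admissible W (clip f).
Proof.
move=> Hf w Ww; have := Hf w Ww; rewrite /Iop.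
case: (boolP [exists i : 'I_(size w).+1, 1 <= f (take i w)]).
  case/existsP => i Hi _.
  rewrite (bigD1 i) //= {1}/clip.
  have -> : (f (take i w) <= 0) = false by apply/negbTE; rewrite -ltNge (lt_le_trans ltr01).
  rewrite Hi lerDl; apply: sumr_ge0 => j _; by case/andP: (clip_range f (take j w)).
rewrite negb_exists => /forallP Hall H; apply: le_trans H _.
apply: ler_sum => i _; rewrite /clip; move: (Hall i); rewrite -ltNge => hi.
case: ifP => // _; case: ifP => // h2; by move: hi; rewrite ltNge h2.
Qed.

Lemma clip_l2 {R : realType} (f : vertex -> R) : (l2norm2 (clip f) <= l2norm2 f)%E.
Proof. by apply: le_esum => v _; rewrite lee_fin clip_sq. Qed.

Section Topo.
Import ArrowAsProduct.
Variable R : realType.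

Lemma cont_sum (I : Type) (r : seq I) (k : I -> vertex) (g : I -> R -> R) :
  (forall i, continuous (g i)) ->
  continuous (fun f : vertex -> R => \sum_(i <- r) g i (f (k i))).
Proof.
move=> gc; elim: r => [|a r IH].
  rewrite (_ : (fun f : vertex -> R => _) = fun _ => 0); last first.
    by apply: funext => f; rewrite big_nil.
  exact: cst_continuous.
rewrite (_ : (fun f : vertex -> R => _) = (fun f : vertex -> R => g a (f (k a))) + (fun f : vertex -> R => \sum_(i <- r) g i (f (k i)))); last first.
  by apply: funext => f; rewrite big_cons.
move=> f; apply: continuousD; last exact: IH.
apply: (continuous_comp (f := fun h : vertex -> R => h (k a)) (g := g a)).
  exact: (@proj_continuous vertex (fun _ => R) (k a) f).
exact: gc.
Qed.

Lemma K_compact : compact [set f : vertex -> R | forall v, (`[0, 1]%classic : set R) (f v)].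
Proof. apply: (@tychonoff _ (fun _ => R) (fun _ => `[0, 1]%classic)) => _; exact: segment_compact. Qed.

Lemma minimizer_exists (W : set vertex) : exists f : vertex -> R, is_cap_minimizer W f.
Proof.
have [fin /andP[c0 c1]] := Cap_fin R W.
set c := fine (@Cap R W).
have Cc : @Cap R W = c%:E by rewrite fineK.
pose K := [set f : vertex -> R | forall v, (`[0, 1]%classic : set R) (f v)].
pose S := fun e : R => [set f : vertex -> R | K f /\ admissible W f /\
   forall s, uniq s -> \sum_(x <- s) f x ^+ 2 <= c + e].
have Sne : forall e, 0 < e -> S e !=set0.
  move=> e e0; have [_ [f Af <-] lt] := lb_ereal_inf_adherent e0 fin.
  exists (clip f); split; [|split].
  - by move=> v; rewrite /= in_itv /=; exact: clip_range.
  - exact: clip_adm.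
  - apply/l2_le; apply: le_trans (clip_l2 f) _.
    by rewrite -/(Cap W) Cc in lt; rewrite EFinD ltW.
pose F := filter_from [set e : R | 0 < e] S.
have FF : ProperFilter F.
  apply: filter_from_proper; last by move=> e /Sne.
  apply: filter_from_filter; first by exists 1%R => /=.
  move=> i j i0 j0; exists (Num.min i j); first by rewrite /= lt_min i0 j0.
  move=> f [Kf [Af Hf]]; split; split => //; split => // s us;
    apply: le_trans (Hf s us) _; rewrite lerD2l ge_min lexx ?orbT //.
have FK : F K by exists 1 => //= f [].
have [p [Kp clp]] := K_compact FF FK.
exists p.
have clS : forall e, 0 < e -> closure (S e) p.
  move=> e e0; rewrite clusterE in clp; apply: clp; by exists e.
have adm : admissible W p.
  move=> w Ww.
  have cl : closed [set f : vertex -> R | 1 <= Iop f w].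
    apply: (preimage_closed (f := fun f : vertex -> R => Iop f w) (D := [set x : R | 1 <= x])).
      move=> f _.
      exact: (@cont_sum _ (index_enum 'I_(size w).+1) (fun i => take i w) (fun _ => id) (fun _ => (fun x => @cvg_id _ _ : continuous_at x id)) f).
    exact: closed_ge.
  apply: cl; apply: (closureS _ (clS 1 ltr01)) => f [_ [Af _]]; exact: Af w Ww.
have nrm : forall s, uniq s -> \sum_(x <- s) p x ^+ 2 <= c.
  move=> s us; apply/ler_addgt0Pr => e e0.
  have cl : closed [set f : vertex -> R | \sum_(x <- s) f x ^+ 2 <= c + e].
    apply: (preimage_closed (f := fun f : vertex -> R => \sum_(x <- s) f x ^+ 2) (D := [set x : R | x <= c + e])).
      move=> f _.
      exact: (@cont_sum _ s id (fun _ y => y ^+ 2) (fun _ => @exprn_continuous _ 2)).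
    exact: closed_le.
  apply: cl; apply: (closureS _ (clS e e0)) => f [_ [_ Hf]]; exact: Hf.
split => //.
apply/eqP; rewrite eq_le; apply/andP; split.
  by rewrite Cc; exact/l2_le.
by apply: ereal_inf_lbound; exists p.
Qed.
End Topo.

Unset Implicit Arguments.

Theorem mainTheorem3 (R : realType) (W : set vertex) (rho : R) :
  stopping_time W -> 0 < rho -> rho < 1 ->
  (Cap (cap_blowup W rho) <= (rho ^- 2)%:E * Cap W)%E.
Proof.
move=> _ r0 r1.
have [f0 Hf0] := minimizer_exists R W.
have Hh : is_cap_minimizer W (@cap_minimizer R W) :=
  epsilon_spec (inhabits (fun _ => 0)) (is_cap_minimizer W) (ex_intro _ f0 Hf0).
case: Hh => hadm hE.
pose h := @cap_minimizer R W.
pose g := fun v => h v / rho.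
have gadm : admissible (cap_blowup W rho) g.
  move=> t [_ [Ht _]]; rewrite /Iop -mulr_suml ler_pdivlMr // mul1r; exact: Ht.
apply: (@le_trans _ _ (l2norm2 g)).
  by apply: ereal_inf_lbound; exists g.
rewrite -hE /l2norm2 /esum; apply: ge_ereal_sup => _ [A [finA _] <-].
rewrite fsbig_finite //= sumEFin.
have -> : \sum_(x <- fset_set A) g x ^+ 2 = rho ^- 2 * \sum_(x <- fset_set A) h x ^+ 2.
  by rewrite mulr_sumr; apply: eq_bigr => v _; rewrite /g expr_div_n mulrC.
rewrite EFinM; apply: lee_wpmul2l.
  by rewrite lee_fin invr_ge0 exprn_ge0 // ltW.
rewrite -sumEFin -fsbig_finite //; apply: ereal_sup_ubound; by exists A.
Qed.
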